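(* Fix $k, n \in \mathbb{N}$. The number of permutations $w \in S_{kn+k-1}$ with exactly $n$ descents such that ${\rm ad}(w)$ is a $(k-1)$-ballot sequence equals $\frac{1}{n+1} A_{n,kn+k-1}$. In particular, the number of Dyck permutations in $S_{2n+1}$ is the Eulerian-Catalan number $EC_n = \frac{1}{n+1}A_{n,2n+1}$.
   Context: $A_{m,n}$ denotes the Eulerian number: the number of permutations of $[n]$ with exactly $m$ descents. For a permutation $w = w_1\cdots w_m$, ${\rm ad}(w)$ is the $0/1$ sequence of length $m-1$ with ${\rm ad}(w)_i = 0$ if $w_i < w_{i+1}$ and $1$ if $w_i > w_{i+1}$. A $0/1$ sequence is an $r$-ballot sequence if every initial segment contains at least $r$ times as many $0$'s as $1$'s. A permutation $w \in S_{2n+1}$ is a Dyck permutation if the lattice path $L(w)$ — starting at $(0,0)$, with $i$-th step $(1,0)$ if $w_i<w_{i+1}$ and $(0,1)$ if $w_i>w_{i+1}$ — ends at $(n,n)$ and all its points satisfy $y \leq x$ (equivalently, $w$ has $n$ descents and ${\rm ad}(w)$ is a $1$-ballot sequence). *)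

(* Defs.v *)
From mathcomp Require Import all_boot all_fingroup.
Set Implicit Arguments. Unset Strict Implicit. Unset Printing Implicit Defensive.

Definition word (N : nat) (w : 'S_N) : seq nat := [seq val (w i) | i <- enum 'I_N].

(* ad(s): 0/1 sequence of length |s|-1; [true] encodes 1 (a descent s_i > s_{i+1}),
   [false] encodes 0 (an ascent). *)
Definition ad (s : seq nat) : seq bool :=
  [seq nth 0 s i.+1 < nth 0 s i | i <- iota 0 (size s).-1].

Definition des (N : nat) (w : 'S_N) : nat := count id (ad (word w)).

Definition ballot (r : nat) (b : seq bool) : bool :=
  [forall j : 'I_(size b).+1,
     r * count id (take j b) <= count negb (take j b)].

Definition eulerian (m N : nat) : nat := #|[set w : 'S_N | des w == m]|.

Definition lpath (b : seq bool) : seq (nat * nat) :=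
  (0, 0) :: [seq (count negb (take j b), count id (take j b)) | j <- iota 1 (size b)].

Definition dyck (n : nat) (w : 'S_(2 * n + 1)) : bool :=
  (last (0, 0) (lpath (ad (word w))) == (n, n))
  && all (fun p : nat * nat => p.2 <= p.1) (lpath (ad (word w))).

(* Main.v *)
Require Import Defs.
From mathcomp Require Import all_boot all_fingroup.
From mathcomp Require Import ssralg ssrnum ssrint zmodp zify.
Set Implicit Arguments. Unset Strict Implicit. Unset Printing Implicit Defensive.
Import GRing.Theory Num.Theory.


Definition wt (k : nat) (b : bool) : int := if b then (1 - k%:Z)%R else 1%R.

Definition AA (M k : nat) (a : nat -> nat) (F : nat -> int) (t x : nat) : int :=
  (F x - (if (M <= a x + t)%N then k%:Z else 0))%R.

Definition cond (M k : nat) (a : nat -> nat) (F : nat -> int) (P : nat -> nat) (t : nat) : bool :=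
  [forall x : 'I_M, (val x != P t) ==> (AA M k a F t (P t) < AA M k a F t x)%R].

Definition ismin (M : nat) (f : nat -> int) (m : int) : Prop :=
  (exists2 y, y < M & f y = m) /\ (forall y, y < M -> (m <= f y)%R).

Lemma ismin_ex M f : 0 < M -> exists m, ismin M f m.
Proof.
elim: M => // [[|M]] IH _.
  exists (f 0); split; first by exists 0.
  by move=> y; rewrite ltnS leqn0 => /eqP ->.
have [m [[y hy fy] hm]] := IH isT.
case: (boolP (f M.+1 < m)%R) => h.
  exists (f M.+1); split; first by exists M.+1.
  move=> z; rewrite ltnS leq_eqVlt => /orP [/eqP -> //|/hm]; lia.
exists m; split; first by exists y => //; lia.
move=> z; rewrite ltnS leq_eqVlt => /orP [/eqP -> |/hm //]; lia.
Qed.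

Lemma ismin_uniq M f m1 m2 : ismin M f m1 -> ismin M f m2 -> m1 = m2.
Proof.
move=> [[y1 h1 e1] H1] [[y2 h2 e2] H2].
have := H1 _ h2; have := H2 _ h1; rewrite e1 e2; lia.
Qed.

Lemma AA_mod M k a F t x :
  (forall x, a x = a (x %% M)) -> (forall x, F x = F (x %% M)) ->
  AA M k a F t x = AA M k a F t (x %% M).
Proof. by move=> ha hF; rewrite /AA {1}hF {1}ha. Qed.

Lemma step_min M k a F P t m :
  1 < M ->
  (forall x, a x < M) ->
  (forall x, a x = a (x %% M)) ->
  (forall x y, x < M -> y < M -> a x = a y -> x = y) ->
  (forall x, F x.+1 = (F x + wt k (a x.+1 < a x)%N)%R) ->
  (forall x, F x = F (x %% M)) ->
  (forall t, P t < M) ->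
  (forall t, a (P t) = (M - t) %% M) ->
  t < M ->
  ismin M (AA M k a F t) m ->
  ismin M (AA M k a F t.+1) (m - (cond M k a F P t.+1)%:Z)%R.
Proof.
move=> hM hlt hper hinj hF hFper hPlt hP ht [[y0 hy0 ey0] hmin].
set p := P t.+1.
have hpM : p < M by apply: hPlt.
have ap : a p = M - t.+1 by rewrite /p hP modn_small //; lia.
have Aeq : forall x, x < M -> x != p -> AA M k a F t.+1 x = AA M k a F t x.
  move=> x hx hxp; rewrite /AA.
  have : a x != a p by apply/eqP => /(hinj _ _ hx hpM) /eqP; rewrite (negbTE hxp).
  rewrite ap => hne.
  have := hlt x.
  case: (leqP M (a x + t.+1)); case: (leqP M (a x + t)) => //; lia.
have Ap : AA M k a F t.+1 p = (AA M k a F t p - k%:Z)%R.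
  rewrite /AA ap.
  case: (leqP M (M - t.+1 + t.+1)); case: (leqP M (M - t.+1 + t)) => //; lia.
have hn1 : AA M k a F t p.+1 = (AA M k a F t p + 1 - k%:Z)%R.
  have hne : a p.+1 != a p.
    apply/eqP; rewrite (hper p.+1) => /hinj.
    have h1 : p.+1 %% M < M by rewrite ltn_mod; lia.
    move=> /(_ h1 hpM) e.
    move: e; case: (ltnP p.+1 M) => hp1.
      by rewrite modn_small //; lia.
    have -> : p.+1 = M by lia.
    rewrite modnn; lia.
  rewrite /AA hF /wt.
  have := hlt p.+1; move: hne; rewrite ap.
  move=> h2 h3; do ! case: ifP; move=> *; lia.
set q := (p + M).-1.
have hq : q.+1 = p + M by rewrite /q; lia.
have hn0 : AA M k a F t p = (AA M k a F t q + 1)%R.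
  have eap : a q.+1 = a p by rewrite hq hper modnDr modn_small.
  have eFp : F q.+1 = F p by rewrite hq hFper modnDr modn_small.
  have hqm : q %% M != p.
    apply/eqP => e.
    have : (p + (M - 1)) %% M = (p + 0) %% M.
      have -> : p + (M - 1) = q by rewrite /q; lia.
      by rewrite e addn0 modn_small.
    move/eqP; rewrite eqn_modDl mod0n modn_small; lia.
  have hne : a q != a p.
    apply/eqP; rewrite (hper q) => /hinj.
    have h1 : q %% M < M by rewrite ltn_mod; lia.
    by move=> /(_ h1 hpM) e; move: hqm; rewrite e eqxx.
  have := hF q; rewrite eap eFp /wt => hFq.
  rewrite /AA hFq ap.
  have := hlt q; move: hne; rewrite ap.
  move=> h2 h3; do ! case: ifP; move=> *; lia.
have gn1 : (m <= AA M k a F t p.+1)%R.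
  rewrite (AA_mod _ _ _ hper hFper); apply: hmin; rewrite ltn_mod; lia.
have gq : (m <= AA M k a F t q)%R.
  rewrite (AA_mod _ _ _ hper hFper); apply: hmin; rewrite ltn_mod; lia.
case: (boolP (AA M k a F t.+1 p < m)%R) => hlow.
  have -> : cond M k a F P t.+1.
    apply/forallP => x; apply/implyP => hx.
    rewrite -/p (Aeq x) //; have := hmin x (ltn_ord x); lia.
  split.
    exists p => //; lia.
  move=> y hy; case: (eqVneq y p) => [->|hyp]; first lia.
  rewrite Aeq //; have := hmin y hy; lia.
have -> : cond M k a F P t.+1 = false.
  apply/negbTE/negP => /forallP /(_ (Ordinal hy0)) /implyP /=.
  have hy0p : y0 != p by apply/eqP => e; move: ey0; rewrite e; lia.
  move=> /(_ hy0p); rewrite -/p (Aeq y0) //; lia.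
split.
  exists y0 => //.
  have hy0p : y0 != p by apply/eqP => e; move: ey0; rewrite e; lia.
  rewrite Aeq //; lia.
move=> y hy; case: (eqVneq y p) => [->|hyp]; first lia.
rewrite Aeq //; have := hmin y hy; lia.
Qed.

Lemma count_cycle M k a F P :
  1 < M ->
  (forall x, a x < M) ->
  (forall x, a x = a (x %% M)) ->
  (forall x y, x < M -> y < M -> a x = a y -> x = y) ->
  (forall x, F x.+1 = (F x + wt k (a x.+1 < a x)%N)%R) ->
  (forall x, F x = F (x %% M)) ->
  (forall t, P t < M) ->
  (forall t, a (P t) = (M - t) %% M) ->
  \sum_(t < M) (cond M k a F P t : nat) = k.
Proof.
move=> hM hlt hper hinj hF hFper hPlt hP.
have [m0 hm0] := ismin_ex (AA M k a F 0) (ltnW hM).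
have H : forall T, T <= M ->
    ismin M (AA M k a F T) (m0 - (\sum_(0 <= t < T) (cond M k a F P t.+1 : nat))%:Z)%R.
  elim => [|T IH] hT.
    by rewrite big_geq // subr0.
  rewrite big_nat_recr //= PoszD opprD addrA.
  by apply: step_min => //; apply: IH; lia.
have AM : forall y, y < M -> AA M k a F M y = (AA M k a F 0 y - k%:Z)%R.
  move=> y hy; rewrite /AA; have := hlt y.
  do ! case: ifP; move=> *; lia.
have HM : ismin M (AA M k a F M) (m0 - k%:Z)%R.
  case: hm0 => [[y hy ey] hmin]; split.
    by exists y => //; rewrite AM // ey.
  move=> z hz; rewrite AM //; have := hmin z hz; lia.
have e := ismin_uniq (H M (leqnn M)) HM.
have eS : (\sum_(0 <= t < M) (cond M k a F P t.+1 : nat)) = k by lia.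
have P0M : P 0 = P M.
  apply: hinj; rewrite ?hPlt // !hP subn0 modnn subnn mod0n //.
have c0M : cond M k a F P 0 = cond M k a F P M.
  apply: eq_forallb => x; congr (_ ==> _); first by rewrite P0M.
  by rewrite P0M !AM // ltrD2r.
rewrite -(big_mkord xpredT (fun t => (cond M k a F P t : nat))).
have eM : M = M.-1.+1 by lia.
have eS' : \sum_(0 <= t < M) (cond M k a F P t.+1 : nat) =
  \sum_(0 <= i < M.-1) (cond M k a F P i.+1 : nat) + cond M k a F P M.
  by rewrite {1}eM big_nat_recr //= -eM.
rewrite {1}eM big_nat_recl // c0M; lia.
Qed.

Definition av N (u : 'S_N.+1) (x : nat) : nat := val (u (inZp x)).
Definition cd N (u : 'S_N.+1) (x : nat) : bool := av u x.+1 < av u x.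
Definition FF k N (u : 'S_N.+1) (j : nat) : int := \sum_(0 <= i < j) wt k (cd u i).
Definition cdes N (u : 'S_N.+1) : nat := count (cd u) (iota 0 N.+1).
Definition cballot k N (u : 'S_N.+1) : bool :=
  [forall j : 'I_N.+1, (0 < val j) ==> (0 < FF k u j)%R].
Definition Pos N (u : 'S_N.+1) (t : nat) : nat := val ((u^-1)%g (inZp (N.+1 - t))).

Lemma av_mod N (u : 'S_N.+1) x : av u x = av u (x %% N.+1).
Proof. by rewrite /av; congr (val (u _)); apply: val_inj; rewrite /= modn_mod. Qed.

Lemma av_lt N (u : 'S_N.+1) x : av u x < N.+1.
Proof. exact: ltn_ord. Qed.

Lemma av_inj N (u : 'S_N.+1) x y : x < N.+1 -> y < N.+1 -> av u x = av u y -> x = y.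
Proof.
move=> hx hy /val_inj /perm_inj /(congr1 val) /=.
by rewrite !modn_small.
Qed.

Lemma FF_S k N (u : 'S_N.+1) x : FF k u x.+1 = (FF k u x + wt k (cd u x))%R.
Proof. by rewrite /FF big_nat_recr. Qed.

Lemma FF_count k N (u : 'S_N.+1) j :
  FF k u j = (j%:Z - (k * count (cd u) (iota 0 j))%:Z)%R.
Proof.
elim: j => [|j IH]; first by rewrite /FF big_geq //=; lia.
have -> : iota 0 j.+1 = iota 0 j ++ [:: j] by rewrite -addn1 iotaD.
rewrite FF_S IH count_cat /= addn0 /wt.
case: (cd u j) => /=; lia.
Qed.

Lemma cd_per N (u : 'S_N.+1) i : cd u (N.+1 + i) = cd u i.
Proof.
by rewrite /cd (av_mod u (N.+1 + i).+1) (av_mod u (N.+1 + i))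
  -addnS !modnDl -!av_mod.
Qed.

Lemma FF_mod k N (u : 'S_N.+1) n :
  N.+1 = k * n.+1 -> cdes u = n.+1 -> forall x, FF k u x = FF k u (x %% N.+1).
Proof.
move=> hM hc.
have H : forall y, FF k u (N.+1 + y) = FF k u y.
  move=> y; rewrite !FF_count iotaD count_cat add0n.
  have -> : count (cd u) (iota N.+1 y) = count (cd u) (iota 0 y).
    by rewrite -(addn0 N.+1) iotaDl count_map; apply: eq_count => i /=; rewrite cd_per.
  move: hc; rewrite /cdes => ->; rewrite mulnDr -hM; lia.
move=> x; rewrite {1}(divn_eq x N.+1).
elim: (x %/ N.+1) => [|q IH]; first by rewrite mul0n add0n.
by rewrite mulSn -addnA H.
Qed.

Lemma Pos_lt N (u : 'S_N.+1) t : Pos u t < N.+1.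
Proof. exact: ltn_ord. Qed.

Lemma av_Pos N (u : 'S_N.+1) t : av u (Pos u t) = (N.+1 - t) %% N.+1.
Proof. by rewrite /av /Pos valZpK permKV. Qed.

Definition shf N (u : 'S_N.+1) (t : nat) (i : 'I_N.+1) : 'I_N.+1 :=
  inZp (av u (i + Pos u t) + t).

Lemma modsmall2 M y : y < M + M -> y %% M = if M <= y then y - M else y.
Proof.
move=> h; case: leqP => hy; last by rewrite modn_small.
have -> : y = (y - M) + M by lia.
by rewrite modnDr modn_small; lia.
Qed.

Lemma shf_inj N (u : 'S_N.+1) (t : 'I_N.+1) : injective (shf u t).
Proof.
move=> i j /(congr1 val) /=.
have := av_lt u (i + Pos u t); have := av_lt u (j + Pos u t); have := ltn_ord t.
move=> h1 h2 h3; rewrite !modsmall2; try lia.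
move=> e.
have e' : av u (i + Pos u t) = av u (j + Pos u t) by move: e; do ! case: ifP; move=> *; lia.
move: e'; rewrite (av_mod u (i + _)) (av_mod u (j + _)) => /av_inj.
rewrite !ltn_mod => /(_ isT isT) /eqP; rewrite eqn_modDr !modn_small // => /eqP.
exact: val_inj.
Qed.

Definition sh N (u : 'S_N.+1) (t : 'I_N.+1) : 'S_N.+1 := perm (@shf_inj N u t).

Lemma av_sh N (u : 'S_N.+1) (t : 'I_N.+1) x :
  av (sh u t) x = (av u (x + Pos u t) + t) %% N.+1.
Proof.
rewrite /av /sh permE /shf /=; congr ((_ + _) %% _).
by rewrite -/(av u _) -/(av u _) (av_mod u (x %% N.+1 + _)) modnDml -av_mod.
Qed.

Lemma av_succ_neq N (u : 'S_N.+1) x : 0 < N -> av u x.+1 != av u x.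
Proof.
move=> hN; apply/eqP; rewrite (av_mod u x.+1) (av_mod u x) => /av_inj.
rewrite !ltn_mod => /(_ isT isT) /eqP.
rewrite -addn1 -{2}(addn0 x) eqn_modDl mod0n modn_small //; lia.
Qed.

Lemma wt_sh k N (u : 'S_N.+1) (t : 'I_N.+1) i : 0 < N ->
  wt k (cd (sh u t) i) =
  (AA N.+1 k (av u) (FF k u) t (Pos u t + i).+1 - AA N.+1 k (av u) (FF k u) t (Pos u t + i))%R.
Proof.
move=> hN.
rewrite /cd !av_sh /AA FF_S /cd.
rewrite (addnC i.+1) (addnC i) addnS.
have hne := av_succ_neq u (Pos u t + i) hN.
have := av_lt u (Pos u t + i); have := av_lt u (Pos u t + i).+1; have := ltn_ord t.
move: hne; set x := av u (Pos u t + i); set y := av u (Pos u t + i).+1.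
move=> hne h1 h2 h3.
rewrite !modsmall2; try lia.
rewrite /wt; do ! case: ifP; move=> *; lia.
Qed.

Lemma FF_sh k N (u : 'S_N.+1) (t : 'I_N.+1) j : 0 < N ->
  FF k (sh u t) j =
  (AA N.+1 k (av u) (FF k u) t (Pos u t + j) - AA N.+1 k (av u) (FF k u) t (Pos u t))%R.
Proof.
move=> hN; elim: j => [|j IH].
  by rewrite /FF big_geq // addn0 subrr.
by rewrite FF_S IH wt_sh // addnS; lia.
Qed.

Lemma sh0 N (u : 'S_N.+1) (t : 'I_N.+1) : sh u t ord0 = ord0.
Proof.
apply: val_inj; have -> : ord0 = inZp 0 :> 'I_N.+1 by apply: val_inj.
rewrite -[val (sh u t (inZp 0))]/(av (sh u t) 0) av_sh add0n av_Pos /=.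
have := ltn_ord t; case: (val t) => [|t'] ht.
  by rewrite subn0 modnn.
rewrite (@modn_small (N.+1 - t'.+1)); last lia.
rewrite subnK ?modnn ?mod0n //; lia.
Qed.

Lemma sh_cdes k N n (u : 'S_N.+1) (t : 'I_N.+1) : 0 < N -> 0 < k ->
  N.+1 = k * n.+1 -> cdes u = n.+1 -> cdes (sh u t) = n.+1.
Proof.
move=> hN hk hM hc.
have := FF_sh k u t N.+1 hN.
rewrite (AA_mod _ _ _ (@av_mod N u) (FF_mod hM hc)) modnDr.
rewrite -(AA_mod _ _ _ (@av_mod N u) (FF_mod hM hc)) subrr FF_count.
move=> /eqP; rewrite subr_eq0 => /eqP [] /esym; rewrite hM => /eqP.
by rewrite eqn_pmul2l // => /eqP.
Qed.

Lemma cballot_sh k N n (u : 'S_N.+1) (t : 'I_N.+1) : 0 < N ->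
  N.+1 = k * n.+1 -> cdes u = n.+1 ->
  cballot k (sh u t) = cond N.+1 k (av u) (FF k u) (Pos u) t.
Proof.
move=> hN hM hc.
have Amod := fun x => @AA_mod N.+1 k (av u) (FF k u) t x (@av_mod N u) (FF_mod hM hc).
set P := Pos u t.
have hP : P < N.+1 := Pos_lt u t.
apply/forallP/forallP.
- move=> H x; apply/implyP => hxP.
  pose j := (x + N.+1 - P) %% N.+1.
  have hj : j < N.+1 by rewrite ltn_mod.
  have ePj : (P + j) %% N.+1 = x.
    rewrite /j modnDmr (_ : P + (x + N.+1 - P) = x + N.+1); last lia.
    by rewrite modnDr modn_small.
  have hj0 : 0 < j.
    rewrite lt0n; apply/eqP => ej; move: ePj; rewrite ej addn0 modn_small // => e.
    by move: hxP; rewrite /= -e eqxx.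
  have := H (Ordinal hj); rewrite /= hj0 /= FF_sh // Amod ePj.
  rewrite -/P; move=> h; rewrite -subr_gt0; exact: h.
- move=> H [j hjM]; apply/implyP => /= hj0.
  rewrite FF_sh // Amod subr_gt0.
  have hx : (P + j) %% N.+1 < N.+1 by rewrite ltn_mod.
  have := H (Ordinal hx); rewrite /= => /implyP; apply.
  apply/eqP => e.
  have : (P + j) %% N.+1 == (P + 0) %% N.+1 by rewrite addn0 e modn_small.
  rewrite eqn_modDl mod0n modn_small // => /eqP; lia.
Qed.

Lemma av0 N (u : 'S_N.+1) : u ord0 = ord0 -> av u 0 = 0.
Proof.
move=> h; rewrite /av (_ : inZp 0 = ord0) ?h //; exact: val_inj.
Qed.

Lemma mod_add_small M a t : a < M -> t < M -> (a + t) %% M = t -> a = 0.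
Proof.
move=> ha ht; rewrite modsmall2; last lia.
case: ifP => *; lia.
Qed.

Lemma sh_inj N (u v : 'S_N.+1) (t : 'I_N.+1) :
  u ord0 = ord0 -> v ord0 = ord0 -> sh u t = sh v t -> u = v.
Proof.
move=> hu hv e.
have ea : forall y, av (sh u t) y = av (sh v t) y by move=> y; rewrite e.
have hPu := Pos_lt u t; have hPv := Pos_lt v t.
set x0 := N.+1 - Pos u t.
have h1 : av (sh u t) x0 = t.
  rewrite av_sh (_ : x0 + Pos u t = N.+1); last by rewrite /x0; lia.
  by rewrite av_mod modnn av0 // add0n modn_small.
have h2 : av v (x0 + Pos v t) = 0.
  apply: (@mod_add_small N.+1 _ t) => //; first exact: av_lt.
  by rewrite -av_sh -ea.
have h3 : (x0 + Pos v t) %% N.+1 = 0.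
  apply: (@av_inj N v); rewrite ?ltn_mod //.
  by rewrite -av_mod h2 av0.
have eP : Pos u t = Pos v t.
  have : (x0 + Pos v t) %% N.+1 == (x0 + Pos u t) %% N.+1.
    by rewrite h3 (_ : x0 + Pos u t = N.+1) ?modnn //; rewrite /x0; lia.
  by rewrite eqn_modDl !modn_small // => /eqP.
apply/permP => i; apply: val_inj.
have := ea (i + N.+1 - Pos u t); rewrite !av_sh -eP.
rewrite (_ : i + N.+1 - Pos u t + Pos u t = i + N.+1); last lia.
have := av_lt u (i + N.+1); have := av_lt v (i + N.+1); have := ltn_ord t.
move=> ht hv' hu'; rewrite !modsmall2; try lia.
move=> e'.
have : av u (i + N.+1) = av v (i + N.+1) by move: e'; do ! case: ifP; move=> *; lia.
rewrite !(av_mod _ (i + N.+1)) modnDr modn_small // /av.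
by rewrite valZpK.
Qed.

Lemma count_u k N n (u : 'S_N.+1) : 0 < N -> N.+1 = k * n.+1 -> cdes u = n.+1 ->
  \sum_(t < N.+1) (cballot k (sh u t) : nat) = k.
Proof.
move=> hN hM hc.
rewrite (eq_bigr (fun t : 'I_N.+1 => (cond N.+1 k (av u) (FF k u) (Pos u) t : nat))); last first.
  by move=> t _; rewrite (cballot_sh t hN hM hc).
apply: count_cycle.
- lia.
- exact: av_lt.
- exact: av_mod.
- exact: av_inj.
- exact: FF_S.
- exact: FF_mod hM hc.
- exact: Pos_lt.
- exact: av_Pos.
Qed.

Lemma count_E k N n : 0 < N -> 0 < k -> N.+1 = k * n.+1 ->
  N.+1 * #|[set u : 'S_N.+1 | (u ord0 == ord0) && (cdes u == n.+1) && cballot k u]| =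
  k * #|[set u : 'S_N.+1 | (u ord0 == ord0) && (cdes u == n.+1)]|.
Proof.
move=> hN hk hM.
set E := [set u : 'S_N.+1 | (u ord0 == ord0) && (cdes u == n.+1)].
set B := [set u : 'S_N.+1 | _].
have step1 : forall t : 'I_N.+1, #|[set u in E | cballot k (sh u t)]| = #|B|.
  move=> t.
  have injE : {in E &, injective (fun u : 'S_N.+1 => sh u t)}.
    move=> u v; rewrite !inE => /andP [/eqP hu _] /andP [/eqP hv _]; exact: sh_inj.
  have inE' : forall u, u \in E -> sh u t \in E.
    move=> u; rewrite !inE => /andP [_ /eqP hc]; rewrite sh0 eqxx /=.
    by rewrite (sh_cdes t hN hk hM hc).
  have imE : (fun u : 'S_N.+1 => sh u t) @: E = E.
    apply/eqP; rewrite eqEcard card_in_imset // leqnn andbT.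
    by apply/subsetP => v /imsetP [u hu ->]; apply: inE'.
  have -> : B = (fun u : 'S_N.+1 => sh u t) @: [set u in E | cballot k (sh u t)].
    apply/setP => v; apply/idP/idP.
    - move=> hv.
      have hvE : v \in E by move: hv; rewrite !inE => /andP [-> _].
      move: hvE; rewrite -{1}imE => /imsetP [u hu ev].
      apply/imsetP; exists u => //; rewrite inE hu /= -ev.
      by move: hv; rewrite inE => /andP [_ ->].
    - move=> /imsetP [u]; rewrite inE => /andP [hu hb] ->.
      rewrite inE -andbA; have := inE' u hu; rewrite inE => /andP [-> ->]; by rewrite hb.
  symmetry; apply: card_in_imset => u v; rewrite inE => /andP [hu _]; rewrite inE => /andP [hv _].
  exact: (injE u v hu hv).
have step2 : \sum_(t < N.+1) #|[set u in E | cballot k (sh u t)]| = N.+1 * #|B|.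
  by rewrite (eq_bigr _ (fun t _ => step1 t)) sum_nat_const card_ord.
have step3 : \sum_(t < N.+1) #|[set u in E | cballot k (sh u t)]| = k * #|E|.
  have e1 : forall t : 'I_N.+1, #|[set u in E | cballot k (sh u t)]| =
       \sum_(u in E) (cballot k (sh u t) : nat).
    move=> t; rewrite -sum1dep_card big_mkcondr /=.
    by apply: eq_bigr => u _; case: (cballot k _).
  rewrite (eq_bigr _ (fun t _ => e1 t)) exchange_big /=.
  rewrite (eq_bigr (fun _ => k)); first by rewrite sum_nat_const mulnC.
  move=> u; rewrite inE => /andP [_ /eqP hc].
exact: (@count_u k N n u hN hM hc).
by rewrite -step2 step3.
Qed.

Definition L N (w : 'S_N) : 'S_N.+1 := lift_perm ord0 ord0 w.

Lemma L0 N (w : 'S_N) : L w ord0 = ord0.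
Proof. exact: lift_perm_id. Qed.

Lemma L_lift N (w : 'S_N) i : L w (lift ord0 i) = lift ord0 (w i).
Proof. exact: lift_perm_lift. Qed.

Lemma L_inj N : injective (@L N).
Proof.
move=> w1 w2 e; apply/permP => i; apply: (@lift_inj _ ord0).
by rewrite -!L_lift e.
Qed.

Definition unlf N (u : 'S_N.+1) (i : 'I_N) : 'I_N :=
  odflt i (unlift (u ord0) (u (lift ord0 i))).

Lemma unlfE N (u : 'S_N.+1) i : lift (u ord0) (unlf u i) = u (lift ord0 i).
Proof.
have hne : u ord0 != u (lift ord0 i) by rewrite (inj_eq perm_inj) neq_lift.
by case: (unlift_some hne) => j hj hu; rewrite /unlf hu.
Qed.

Lemma unlf_inj N (u : 'S_N.+1) : injective (unlf u).
Proof.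
move=> i j e; have := unlfE u i; rewrite e unlfE => /perm_inj /lift_inj.
by [].
Qed.

Lemma L_surj N (u : 'S_N.+1) : u ord0 = ord0 -> L (perm (@unlf_inj N u)) = u.
Proof.
move=> h; apply/permP => x; case: (unliftP ord0 x) => [i ->|->].
  by rewrite L_lift permE -[in LHS]h unlfE.
by rewrite L0 h.
Qed.

Lemma card_L N (P : pred 'S_N) (Q : pred 'S_N.+1) :
  (forall w, Q (L w) = P w) -> (forall u, Q u -> u ord0 = ord0) ->
  #|[set w | P w]| = #|[set u | Q u]|.
Proof.
move=> hQP hQ0.
have -> : [set u | Q u] = (@L N) @: [set w | P w].
  apply/setP => u; rewrite inE; apply/idP/imsetP.
  - move=> hu; exists (perm (@unlf_inj N u)); last by rewrite L_surj // hQ0.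
    by rewrite inE -hQP L_surj // hQ0.
  - by move=> [w]; rewrite inE => hw ->; rewrite hQP.
by rewrite card_imset //; exact: L_inj.
Qed.

Lemma av_L0 N (w : 'S_N) : av (L w) 0 = 0.
Proof. by apply: av0; exact: L0. Qed.

Lemma av_LS N (w : 'S_N.+1) i : i < N.+1 -> av (L w) i.+1 = (val (w (inord i))).+1.
Proof.
move=> hi; rewrite /av (_ : inZp i.+1 = lift ord0 (inord i)).
  by rewrite L_lift.
by apply: val_inj; rewrite /= /bump /= inordK // modn_small.
Qed.

Lemma av_LN N (w : 'S_N) : av (L w) N.+1 = 0.
Proof. by rewrite av_mod modnn av_L0. Qed.

Lemma word_nth N (w : 'S_N.+1) i : i < N.+1 -> nth 0 (word w) i = val (w (inord i)).
Proof.
move=> hi; rewrite /word (nth_map (inord i)) ?size_enum_ord //.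
by congr (val (w _)); apply: val_inj; rewrite /= nth_enum_ord // inordK.
Qed.

Lemma size_word N (w : 'S_N) : size (word w) = N.
Proof. by rewrite size_map size_enum_ord. Qed.

Lemma ad_word N (w : 'S_N.+1) : ad (word w) = [seq cd (L w) i.+1 | i <- iota 0 N].
Proof.
rewrite /ad size_word /=; apply/eq_in_map => i; rewrite mem_iota add0n => /andP [_ hi].
rewrite /cd !av_LS ?ltnS ?word_nth //; lia.
Qed.

Lemma cdes_L N (w : 'S_N.+1) : cdes (L w) = (des w).+1.
Proof.
rewrite /des ad_word count_map /cdes.
have -> : iota 0 N.+2 = 0 :: (map (addn 1) (iota 0 N) ++ [:: N.+1]).
  have -> : N.+2 = 1 + (N + 1) by lia.
  rewrite !iotaD /= -(iotaDl 1 0) add1n addn1 //.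
rewrite /= count_cat count_map /= {1}/cd av_L0 /= addn0.
have -> : cd (L w) N.+1 by rewrite /cd av_LN av_LS.
by rewrite addn1; congr (_.+1); apply: eq_count => i.
Qed.

Lemma FF_L k N (w : 'S_N.+1) j :
  FF k (L w) j.+1 = (j.+1%:Z - (k * count (fun i => cd (L w) i.+1) (iota 0 j))%:Z)%R.
Proof.
rewrite FF_count; congr (_ - (k * _)%:Z)%R.
rewrite (_ : j.+1 = 1 + j) // iotaD /= {1}/cd av_L0 /=.
rewrite add0n (iotaDl 1 0) count_map.
by apply: eq_count.
Qed.

Lemma ballot_L k N (w : 'S_N.+1) : 0 < k ->
  ballot (k - 1) (ad (word w)) = cballot k (L w).
Proof.
move=> hk.
set g := fun i => cd (L w) i.+1.
have hc : forall j, count g (iota 0 j) <= j.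
  by move=> j; rewrite -{2}(size_iota 0 j) count_size.
have key : forall j, j <= N ->
    ((k - 1) * count g (iota 0 j) <= j - count g (iota 0 j)) =
    (0 < FF k (L w) j.+1)%R.
  move=> j hj; rewrite FF_L -/g.
  have := hc j; set c := count g (iota 0 j) => hcj.
  have e : (k - 1) * c = k * c - c by rewrite mulnBl mul1n.
  have : c <= k * c by rewrite leq_pmull.
  rewrite e; case: leqP; case: ltrP => //; lia.
have cid : forall j, count (preim g id) (iota 0 j) = count g (iota 0 j).
  by move=> j; apply: eq_count.
have cneg : forall j, count (preim g negb) (iota 0 j) = j - count g (iota 0 j).
  move=> j; have := count_predC g (iota 0 j); rewrite size_iota.
  have -> : count (preim g negb) (iota 0 j) = count (predC g) (iota 0 j) by apply: eq_count.
  lia.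
rewrite /ballot /cballot ad_word size_map size_iota.
apply/forallP/forallP.
- move=> H [[|j] hj] //=.
  have hjN : j < N.+1 by lia.
  have := H (Ordinal hjN); rewrite /= -map_take take_iota !count_map.
  by rewrite (minn_idPl _) -/g ?cid ?cneg ?key //; lia.
- move=> H [j hj] /=.
  have hjN : j.+1 < N.+2 by lia.
  have := H (Ordinal hjN); rewrite /= -map_take take_iota !count_map.
  by rewrite (minn_idPl _) -/g ?cid ?cneg ?key //; lia.
Qed.

Lemma ballot0 b : ballot 0 b.
Proof. by apply/forallP => j; rewrite mul0n. Qed.

Lemma part1 k n N : 0 < k -> N.+1 = k * n.+1 ->
  n.+1 * #|[set w : 'S_N | (des w == n) && ballot (k - 1) (ad (word w))]| = eulerian n N.
Proof.
move=> hk hM; rewrite /eulerian.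
case: N hM => [|N] hM.
  have /andP [/eqP ek /eqP en] : (k == 1) && (n.+1 == 1) by rewrite -muln_eq1 -hM.
  move: en => [en]; subst k n; rewrite mul1n.
  by apply: eq_card => w; rewrite !inE ballot0 andbT.
have e1 : #|[set w : 'S_N.+1 | (des w == n) && ballot (k - 1) (ad (word w))]| =
   #|[set u : 'S_N.+2 | (u ord0 == ord0) && (cdes u == n.+1) && cballot k u]|.
  apply: card_L => [w|u /andP [/andP [/eqP -> _] _] //].
  by rewrite L0 eqxx cdes_L eqSS ballot_L.
have e2 : #|[set w : 'S_N.+1 | des w == n]| =
   #|[set u : 'S_N.+2 | (u ord0 == ord0) && (cdes u == n.+1)]|.
  apply: card_L => [w|u /andP [/eqP -> _] //].
  by rewrite L0 eqxx cdes_L eqSS.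
rewrite e1 e2.
have := count_E (isT : 0 < N.+1) hk hM; rewrite {1}hM -mulnA => /eqP.
by rewrite eqn_pmul2l // => /eqP.
Qed.

Lemma size_ad s : size (ad s) = (size s).-1.
Proof. by rewrite size_map size_iota. Qed.

Lemma lpathE b : lpath b =
  [seq (count negb (take j b), count id (take j b)) | j <- iota 0 (size b).+1].
Proof. by rewrite /lpath /= take0. Qed.

Lemma dyckE n (w : 'S_(2 * n + 1)) :
  dyck w = (des w == n) && ballot 1 (ad (word w)).
Proof.
rewrite /dyck /des lpathE.
set b := ad (word w).
have hs : size b = 2 * n by rewrite /b size_ad size_word; lia.
have hc := count_predC id b.
have hneg : count negb b = count (predC id) b by apply: eq_count.
congr (_ && _).
  rewrite (_ : iota 0 (size b).+1 = rcons (iota 0 (size b)) (size b)); last first.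
    by rewrite -cats1 -addn1 iotaD.
  rewrite map_rcons last_rcons take_size xpair_eqE.
  apply/andP/eqP => [[_ /eqP //]|e]; split; apply/eqP => //; lia.
rewrite all_map /ballot; apply/allP/forallP => [H j|H j].
  have := H j; rewrite mem_iota /= ltn_ord mul1n; exact.
rewrite mem_iota add0n /= => hj.
by have := H (Ordinal hj); rewrite mul1n.
Qed.

Theorem mainTheorem5 :
  (forall k n : nat, 0 < k ->
     n.+1 * #|[set w : 'S_(k * n + k - 1) | (des w == n) && ballot (k - 1) (ad (word w))]|
     = eulerian n (k * n + k - 1))
  /\
  (forall n : nat,
     n.+1 * #|[set w : 'S_(2 * n + 1) | dyck w]| = eulerian n (2 * n + 1)).
Proof.
split.
- move=> k n hk; apply: part1 => //; rewrite mulnS; lia.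
- move=> n; rewrite -(@part1 2 n (2 * n + 1)) //; last by lia.
  congr (_ * _); apply: eq_card => w; rewrite !inE dyckE //.
Qed.
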